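(* Let $k,h$ be integers with $k\ge1$ and $h\ge k+2$. Let $T^*(k,h)$ be the tree with vertex set $\{x,z\}\cup\{z_1,\dots,z_k\}\cup\{x_{(i,j)}:1\le i,j\le h-1\}\cup\{y_{(i,j)}:1\le i,j\le h-1\}$ and edge set $\{xx_{(i,j)}:1\le i,j\le h-1\}\cup\{x_{(i,j)}y_{(i,j)}:1\le i,j\le h-1\}\cup\{xz,zz_1,\dots,zz_k\}$. Then $\tau(T^*(k,h))=k$ and $\beta_p(T^*(k,h))=h$.
   Context: Two vertices $u,v$ are twins if $N(u)\setminus\{v\}=N(v)\setminus\{u\}$; the twin number $\tau(G)$ is the maximum cardinality of an equivalence class of the twin relation. For a partition $\Pi=\{S_1,\dots,S_m\}$ of $V(G)$, $r(u|\Pi)=(d(u,S_1),\dots,d(u,S_m))$ with $d(u,S)=\min_{w\in S}d(u,w)$; $\Pi$ is locating if $r(u|\Pi)\ne r(v|\Pi)$ for all distinct $u,v$; $\beta_p(G)$ is the minimum size of a locating partition. *)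

(* Defs.v *)
From mathcomp Require Import all_boot.
Set Implicit Arguments. Unset Strict Implicit. Unset Printing Implicit Defensive.

Section Graphs.
Variables (T : finType) (e : rel T).

Fixpoint ball (n : nat) (u : T) : {set T} :=
  match n with
  | 0 => [set u]
  | n'.+1 => ball n' u :|: [set w | [exists v in ball n' u, e v w]]
  end.

(* graph distance (#|T| plays the role of infinity; graphs below are connected) *)
Definition dist (u v : T) : nat :=
  \big[minn/#|T|]_(n < #|T| | v \in ball n u) (n : nat).

Definition dset (u : T) (S : {set T}) : nat :=
  \big[minn/#|T|]_(w in S) dist u w.

Definition locating (P : {set {set T}}) : bool :=
  [forall u, forall v, (u != v) ==> [exists S in P, dset u S != dset v S]].

Definition partition_dim : nat :=
  \big[minn/#|T|]_(P : {set {set T}} | partition P [set: T] && locating P) #|P|.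

Definition nbhd (u : T) : {set T} := [set w | e u w].

Definition twins (u v : T) : bool := (nbhd u :\ v) == (nbhd v :\ u).

Definition twin_number : nat := \max_(u : T) #|[set v | twins u v]|.

End Graphs.

(* Vertices:
   inl None             = x
   inl (Some None)      = z
   inl (Some (Some i))  = z_{i+1}          (i : 'I_k)
   inr (p, false)       = x_{(i+1,j+1)}    (p = (i,j) : 'I_(h-1) * 'I_(h-1))
   inr (p, true)        = y_{(i+1,j+1)}                                      *)
Definition Tvert (k h : nat) : finType :=
  (option (option 'I_k) + (('I_(h - 1) * 'I_(h - 1)) * bool))%type.

Definition Tadj0 (k h : nat) (u v : Tvert k h) : bool :=
  match u, v with
  | inl None, inr (_, false) => true
  | inr (p, false), inr (q, true) => p == q
  | inl None, inl (Some None) => true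
  | inl (Some None), inl (Some (Some _)) => true
  | _, _ => false
  end.

Definition Tadj (k h : nat) : rel (Tvert k h) :=
  fun u v => Tadj0 u v || Tadj0 v u.

(* Main.v *)
Require Import Defs.
From mathcomp Require Import all_boot zify.
Set Implicit Arguments. Unset Strict Implicit. Unset Printing Implicit Defensive.
Section Gen.
Variables (T : finType) (e : rel T).

Lemma bigmin_le (I : finType) (P : pred I) (F : I -> nat) x0 j :
  P j -> \big[minn/x0]_(i | P i) F i <= F j.
Proof.
move=> Pj; rewrite unlock /reducebig.
have : j \in index_enum I by rewrite mem_index_enum.
elim: (index_enum I) => //= a r IH; rewrite inE => /orP [/eqP <-|jr].
  by rewrite Pj geq_minl.
case: (P a); last exact: IH.
by rewrite (leq_trans (geq_minr _ _) (IH jr)).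
Qed.

Lemma bigmin_ge (I : finType) (P : pred I) (F : I -> nat) x0 c :
  c <= x0 -> (forall i, P i -> c <= F i) -> c <= \big[minn/x0]_(i | P i) F i.
Proof.
move=> h0 hF; apply: (big_ind (fun y => c <= y)) => //.
by move=> x y hx hy; rewrite leq_min hx hy.
Qed.

Lemma ballS n u w : (w \in ball e n.+1 u) = (w \in ball e n u) || [exists v in ball e n u, e v w].
Proof. by rewrite /= in_setU inE. Qed.

Lemma ball0 u w : (w \in ball e 0 u) = (w == u).
Proof. by rewrite /= inE. Qed.

Lemma ball1 u w : (w \in ball e 1 u) = (w == u) || e u w.
Proof.
rewrite ballS ball0; congr (_ || _); apply/existsP/idP => [[v /andP[]]|].
  by rewrite ball0 => /eqP ->.
by move=> h; exists u; rewrite ball0 eqxx.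
Qed.

Lemma ball_mono m n u : m <= n -> ball e m u \subset ball e n u.
Proof.
elim: n => [|n IH]; first by rewrite leqn0 => /eqP ->.
rewrite leq_eqVlt => /orP [/eqP -> //|]; rewrite ltnS => /IH h.
apply: (subset_trans h); apply/subsetP => w hw; by rewrite ballS hw.
Qed.

Lemma dist_le u w d : d < #|T| -> w \in ball e d u -> dist e u w <= d.
Proof.
move=> hd hw; rewrite /dist.
by apply: (@bigmin_le _ (fun n : 'I_#|T| => w \in ball e n u) (fun n => n : nat) _ (Ordinal hd)).
Qed.

Lemma dist_gt u w d : d < #|T| -> w \notin ball e d u -> d < dist e u w.
Proof.
move=> hd hw; rewrite /dist; apply: bigmin_ge => // i hi.
rewrite ltnNge; apply/negP => hid; move/subsetP: (ball_mono u hid) => /(_ w hi).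
by apply/negP.
Qed.

Lemma dset_le u (S : {set T}) d w : d < #|T| -> w \in S -> w \in ball e d u -> dset e u S <= d.
Proof.
move=> hd hS hw; rewrite /dset.
apply: leq_trans (@bigmin_le _ (fun w => w \in S) (dist e u) _ _ hS) _.
exact: dist_le.
Qed.

Lemma dset_gt u (S : {set T}) d : d < #|T| -> (forall w, w \in S -> w \notin ball e d u) -> d < dset e u S.
Proof.
move=> hd h; rewrite /dset; apply: bigmin_ge => // w hw; exact: dist_gt (h w hw).
Qed.

Lemma sep u v (S : {set T}) d w : d < #|T| -> w \in S -> w \in ball e d u ->
  (forall w, w \in S -> w \notin ball e d v) -> dset e u S != dset e v S.
Proof.
move=> hd hS hw h; have h1 := dset_le hd hS hw; have h2 := dset_gt hd h.
by rewrite neq_ltn (leq_ltn_trans h1 h2).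
Qed.

Lemma ball_phi_sub (phi : T -> nat) u :
  phi u = 0 -> (forall a b, e a b -> phi b <= (phi a).+1) ->
  forall n w, w \in ball e n u -> phi w <= n.
Proof.
move=> h0 hL; elim=> [|n IH] w; first by rewrite ball0 => /eqP ->; rewrite h0.
rewrite ballS => /orP [/IH h|/existsP [v /andP [hv hvw]]]; first exact: leqW.
apply: leq_trans (hL _ _ hvw) _; rewrite ltnS; exact: IH.
Qed.

Lemma ball_phi (phi : T -> nat) u :
  (forall w, (phi w == 0) = (w == u)) -> (forall a b, e a b -> phi b <= (phi a).+1) ->
  (forall w, 0 < phi w -> exists a, e a w && (phi a < phi w)) ->
  forall n w, (w \in ball e n u) = (phi w <= n).
Proof.
move=> h0 hL hD; elim=> [|n IH] w; first by rewrite ball0 leqn0 h0.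
apply/idP/idP.
  apply: ball_phi_sub => //; by apply/eqP; rewrite h0.
rewrite ballS leq_eqVlt ltnS IH => /orP [/eqP hw|->]; last by [].
have [a /andP [ha hlt]] : exists a, e a w && (phi a < phi w) by apply: hD; rewrite hw.
apply/orP; right; apply/existsP; exists a; rewrite ha IH andbT.
by rewrite -ltnS -hw.
Qed.

Lemma dist_phi (phi : T -> nat) u :
  (forall w, (phi w == 0) = (w == u)) -> (forall a b, e a b -> phi b <= (phi a).+1) ->
  (forall w, 0 < phi w -> exists a, e a w && (phi a < phi w)) ->
  forall w, phi w < #|T| -> dist e u w = phi w.
Proof.
move=> h0 hL hD w hw; have hb := ball_phi h0 hL hD.
apply/eqP; rewrite eqn_leq dist_le ?hb //=.
case: (posnP (phi w)) => [->//|hp].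
rewrite -(prednK hp); apply: dist_gt; first by rewrite (leq_trans _ hw) // prednK // ltnW.
by rewrite hb -ltnNge prednK.
Qed.

End Gen.
Section Tree.
Variables (k h : nat).
Hypothesis hk : 0 < k.
Hypothesis hh : k + 2 <= h.
Local Notation T := (Tvert k h).
Local Notation e := (@Tadj k h).
Local Notation vX := (inl None : T).
Local Notation vZ := (inl (Some None) : T).
Local Notation vL t := (inl (Some (Some t)) : T).
Local Notation vA p := (inr (p, false) : T).
Local Notation vB p := (inr (p, true) : T).

Lemma cardT : #|T| = k.+2 + (h - 1) * (h - 1) * 2.
Proof. by rewrite card_sum !card_option !card_prod !card_ord card_bool. Qed.

Definition isL (u : T) := if u is inl (Some (Some _)) then true else false.

Lemma nt (u v w : T) : w \in nbhd e u -> w != v -> w \notin nbhd e v -> ~~ twins e u v.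
Proof.
move=> h1 h2 h3; apply/negP => /eqP E.
have : w \in nbhd e u :\ v by rewrite in_setD1 h2 h1.
rewrite E !inE; case/andP => _ h4; move: h3; by rewrite inE h4.
Qed.

Lemma twinsC u v : twins e u v = twins e v u.
Proof. by rewrite /twins eq_sym. Qed.

Definition t0 : 'I_k := Ordinal hk.
Lemma hm1 : 1 < h - 1.
Proof. by rewrite ltn_subRL (leq_trans _ hh) // addn2 ltnS. Qed.
Definition o0 : 'I_(h-1) := Ordinal (ltnW hm1).
Definition o00 := (o0, o0).
Lemma eqI p q b c : (inr (p, b) == inr (q, c) :> T) = (p == q) && (b == c).
Proof. by []. Qed.

Lemma twinsE u v : twins e u v = (u == v) || (isL u && isL v).
Proof.
have wit : forall (u v w : T), (e u w) -> (w != v) -> ~~ e v w -> twins e u v = false.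
  by move=> u0 v0 w0 a b c; apply/negbTE; apply: (nt (w := w0)); rewrite ?inE.
have tt : forall u : T, twins e u u = true by move=> u0; rewrite /twins eqxx.
case: u => [[[t|]|]|[p []]]; case: v => [[[s|]|]|[q []]] => //=;
  rewrite ?eqI ?andbT ?andbF ?orbF ?orbT ?tt //;
  try (case: (p =P q) => [<-|/eqP pq]; [by rewrite !tt|]);
  try (by apply: (wit _ _ vX));
  try (by apply: (wit _ _ vZ));
  try (by apply: (wit _ _ (vL t0))).
all: try (by rewrite twinsC; apply: (wit _ _ vX)).
all: try (by rewrite twinsC; apply: (wit _ _ vZ)).
all: try (by rewrite twinsC; apply: (wit _ _ (vA o00))).
all: try (by apply: (wit _ _ (vA o00))).
all: try (by apply: (wit _ _ (vB p)); rewrite /Tadj /= ?eqI ?eqxx ?andbT ?andbF ?orbF //= ?(eq_sym q) ?pq).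
all: try (by apply: (wit _ _ (vA p)); rewrite /Tadj /= ?eqI ?eqxx ?andbT ?andbF ?orbF //= ?(eq_sym q) ?pq).
rewrite /twins; apply/eqP/setP => w; rewrite !inE.
by case: w => [[[r|]|]|[q []]]; rewrite /Tadj /= ?andbF.
Qed.

Lemma card_class u : #|[set v | twins e u v]| = if isL u then k else 1.
Proof.
case hu: (isL u).
  have -> : [set v | twins e u v] = (fun t => vL t) @: [set: 'I_k].
  { apply/setP => v; rewrite inE twinsE hu /=.
    case: u hu => [[[t'|]|]|?] // _.
    case: v => [[[t|]|]|[q b]]; rewrite ?orbT /=.
      by symmetry; apply/imsetP; exists t; rewrite ?inE.
    all: symmetry; apply: negbTE; apply/negP => /imsetP [x _ E]; by case: E. }
  by rewrite card_imset ?cardsT ?card_ord // => a b [].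
have -> : [set v | twins e u v] = [set u].
  by apply/setP => v; rewrite !inE twinsE hu /= orbF eq_sym.
by rewrite cards1.
Qed.

Lemma twin_val : twin_number e = k.
Proof.
apply/eqP; rewrite eqn_leq; apply/andP; split.
  apply/bigmax_leqP => u _; rewrite card_class; by case: (isL u).
apply: leq_trans (leq_bigmax (vL t0)); by rewrite card_class.
Qed.

Local Notation n := (h - 1).
Ltac bnd := repeat match goal with x : _ |- _ =>
  let b := constr:(ltn_ord x) in
  lazymatch goal with _ : is_true (nat_of_ord x < _) |- _ => fail | _ => have := b; intro end end.
Lemma eqL (a b : 'I_k) : (vL a == vL b) = (a == b).
Proof. by []. Qed.
Ltac fin := rewrite ?eqI ?eqL ?xpair_eqE -?val_eqE -?subn1 /=; intros; bnd; lia.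

Definition clsn (w : T) : nat :=
  match w with
  | inl None => n | inl (Some None) => n | inl (Some (Some t)) => t
  | inr ((i, j), false) => i | inr ((i, j), true) => j end.

Lemma hkn : k < n.
Proof. lia. Qed.

Lemma clsn_lt w : clsn w < h.
Proof.
have := hkn.
case: w => [[[t|]|]|[[i j] []]] /= => [||||]; try lia.
- move: (ltn_ord t); lia.
- move: (ltn_ord j); lia.
- move: (ltn_ord i); lia.
Qed.

Definition C (l : nat) : {set T} := [set w | clsn w == l].
Lemma inC w l : (w \in C l) = (clsn w == l).
Proof. by rewrite inE. Qed.
Definition P0 : {set {set T}} := (fun l : 'I_h => C l) @: [set: 'I_h].

Lemma CinP l : l < h -> C l \in P0.
Proof. by move=> hl; apply/imsetP; exists (Ordinal hl). Qed.

Lemma wit l : l < h -> exists w, clsn w = l.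
Proof.
case: (ltnP l n) => [lt|ge] hl; first by exists (vA (Ordinal lt, o0)).
by exists vX => /=; lia.
Qed.

Lemma P0_part : partition P0 [set: T].
Proof.
apply/and3P; split.
- apply/eqP/setP => w; rewrite inE; apply/bigcupP; exists (C (clsn w)).
    exact: CinP (clsn_lt w).
  by rewrite inE.
- apply/trivIsetP => A B /imsetP [l _ ->] /imsetP [l' _ ->] ne.
  rewrite disjoint_subset; apply/subsetP => w; rewrite !inE => /eqP a.
  apply/negP => /eqP b; move: ne.
  by rewrite -a -b eqxx.
- apply/negP => /imsetP [l _ E]; have [w hw] := wit (ltn_ord l).
  have : w \in C l by rewrite inE hw.
  by rewrite -E inE.
Qed.

Lemma P0_card : #|P0| = h.
Proof.
rewrite card_imset ?cardsT ?card_ord // => l l' E.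
have [w hw] := wit (ltn_ord l).
have : w \in C l by rewrite inE hw.
by rewrite E inE hw => /eqP hl; apply: val_inj.
Qed.

Lemma cardT3 : 2 < #|T|.
Proof. rewrite cardT; nia. Qed.

Local Notation G u v := (exists2 S, S \in P0 & dset e u S != dset e v S).

Lemma Gsym u v : G u v -> G v u.
Proof. by case=> S h1 h2; exists S; rewrite // eq_sym. Qed.

Lemma sepC u v : clsn u != clsn v -> G u v.
Proof.
move=> ne; exists (C (clsn u)); first exact: CinP (clsn_lt u).
apply: (sep (d:=0) (w:=u)).
- by have := cardT3; lia.
- by rewrite inE.
- by rewrite ball0.
move=> w; rewrite inE ball0 => /eqP cw; apply/negP => /eqP E; move: ne.
by rewrite -E cw eqxx.
Qed.

Lemma nlt : n.-1 < n.
Proof. lia. Qed.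
Definition otop : 'I_n := Ordinal nlt.

Lemma s1 : G vX vZ.
Proof.
have := hkn; have := cardT3 => c3 hk1.
exists (C n.-1); first by apply: CinP; lia.
apply: (sep (d:=1) (w := vA (otop, o0))) => //.
- lia.
- by rewrite inC.
- by rewrite ball1.
move=> w; rewrite inC ball1; case: w => [[[t|]|]|[[i j] []]] /=; rewrite /Tadj /=; fin.
Qed.


Ltac cw := let w := fresh "w" in move=> w; rewrite inC ?ball1; case: w => [[[a|]|]|[[a b] []]] /=; rewrite /Tadj /=; fin.

Lemma s2 (i j : 'I_n) (t : 'I_k) : j != i -> (t : nat) = i -> G (vA (i, j)) (vL t).
Proof.
move=> ji ti; have := cardT3 => c3.
exists (C j); first by apply: CinP; move: (ltn_ord j); lia.
apply: (sep (d:=1) (w := vB (i, j))).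
- lia.
- by rewrite inC.
- by rewrite ball1 /Tadj /= eqxx orbT.
move: ji ti; rewrite -!val_eqE /= => ji ti; cw.
Qed.

Definition phiL (t : 'I_k) (w : T) : nat :=
  match w with
  | inl (Some (Some s)) => if s == t then 0 else 2
  | inl (Some None) => 1 | inl None => 2
  | inr (_, false) => 3 | inr (_, true) => 4 end.

Lemma phiL_lip t a b : e a b -> phiL t b <= (phiL t a).+1.
Proof.
case: a => [[[?|]|]|[? []]]; case: b => [[[?|]|]|[? []]]; rewrite /Tadj /= => //;
  repeat case: (_ == _) => //.
Qed.

Lemma s3 (i : 'I_n) (t : 'I_k) : (t : nat) = i -> G (vA (i, i)) (vL t).
Proof.
move=> ti; have := cardT3 => c3; have := hkn => hk1.
exists (C n.-1); first by apply: CinP; lia.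
apply: (sep (d:=2) (w := vA (otop, o0))).
- lia.
- by rewrite inC.
- rewrite ballS; apply/orP; right; apply/existsP; exists vX.
  by rewrite ball1 /Tadj /= ?orbT.
move=> w; rewrite inC; apply: contraTN => hw.
have h0 : phiL t (vL t) = 0 by rewrite /= eqxx.
have hp := ball_phi_sub h0 (@phiL_lip t) hw.
move: hp; case: w {hw} => [[[s|]|]|[[? ?] []]] /=; first case: (s == t); fin.
Qed.

Lemma s4 (i j : 'I_n) (t : 'I_k) : G (vL t) (vB (i, j)).
Proof.
have := cardT3 => c3.
exists (C n); first by apply: CinP; lia.
apply: (sep (d:=1) (w := vZ)).
- lia.
- by rewrite inC.
- by rewrite ball1 /Tadj /=.
cw.
Qed.

Lemma s5 (i j j' : 'I_n) : j != i -> j != j' -> G (vA (i, j)) (vA (i, j')).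
Proof.
move=> ji jj; have := cardT3 => c3.
exists (C j); first by apply: CinP; move: (ltn_ord j); lia.
apply: (sep (d:=1) (w := vB (i, j))).
- lia.
- by rewrite inC.
- by rewrite ball1 /Tadj /= eqxx orbT.
move: ji jj; rewrite -!val_eqE /= => ? ?; cw.
Qed.

Lemma s6 (i j i' j' : 'I_n) : G (vA (i, j)) (vB (i', j')).
Proof.
have := cardT3 => c3.
exists (C n); first by apply: CinP; lia.
apply: (sep (d:=1) (w := vX)).
- lia.
- by rewrite inC.
- by rewrite ball1 /Tadj /=.
cw.
Qed.

Lemma s7 (i j i' : 'I_n) : i != j -> i != i' -> G (vB (i, j)) (vB (i', j)).
Proof.
move=> ij ii; have := cardT3 => c3.
exists (C i); first by apply: CinP; move: (ltn_ord i); lia.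
apply: (sep (d:=1) (w := vA (i, j))).
- lia.
- by rewrite inC.
- by rewrite ball1 /Tadj /= eqxx orbT.
move: ij ii; rewrite -!val_eqE /= => ? ?; cw.
Qed.

Lemma loc u v : u != v -> G u v.
Proof.
case: (eqVneq (clsn u) (clsn v)) => [eqc|ne]; last by move=> _; apply: sepC.
have := hkn => hk1.
move: eqc; case: u => [[[t|]|]|[[i j] []]]; case: v => [[[t'|]|]|[[i' j'] []]] /= eqc neq.
all: try (by exfalso; bnd; lia).
all: try (by rewrite eqxx in neq).
all: try (by apply: s1).
all: try (by apply: Gsym; apply: s1).
all: try (by apply: s4).
all: try (by apply: Gsym; apply: s4).
all: try (by apply: s6).
all: try (by apply: Gsym; apply: s6).
- by move/val_inj: eqc => E; rewrite E eqxx in neq.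
- apply: Gsym; case: (eqVneq j' i') => [->|ne]; first exact: s3.
  exact: s2.
- move/val_inj: eqc => E; subst j'.
  rewrite eqI xpair_eqE eqxx !andbT in neq.
  case: (eqVneq i j) => [E|ij]; last exact: s7.
  apply: Gsym; apply: s7; [by rewrite -E eq_sym | by rewrite eq_sym].
- case: (eqVneq j i) => [->|ne]; first exact: s3.
  exact: s2.
- move/val_inj: eqc => E; subst i'.
  rewrite eqI xpair_eqE eqxx andbT /= in neq.
  case: (eqVneq j i) => [E|ji]; last exact: s5.
  apply: Gsym; apply: s5; [by rewrite -E eq_sym | by rewrite eq_sym].
Qed.

Lemma P0_loc : locating e P0.
Proof.
apply/forallP => u; apply/forallP => v; apply/implyP => neq.
have [S hS hd] := loc neq; apply/existsP; exists S; by rewrite hS hd.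
Qed.

Definition phiA (p : 'I_n * 'I_n) (w : T) : nat :=
  match w with
  | inl None => 1 | inl (Some None) => 2 | inl (Some (Some _)) => 3
  | inr (q, false) => if q == p then 0 else 2
  | inr (q, true) => if q == p then 1 else 3 end.

Lemma phiA0 p w : (phiA p w == 0) = (w == vA p).
Proof. case: w => [[[?|]|]|[q []]] //=; rewrite eqI ?andbT ?andbF; by case: (q == p). Qed.

Lemma phiA_lip p a b : e a b -> phiA p b <= (phiA p a).+1.
Proof.
case: a => [[[?|]|]|[q []]]; case: b => [[[?|]|]|[r []]]; rewrite /Tadj /= => //.
all: rewrite ?orbF => /eqP E; subst; by case: (_ == _).
Qed.

Lemma phiA_desc p w : 0 < phiA p w -> exists a, e a w && (phiA p a < phiA p w).
Proof.
case: w => [[[?|]|]|[q []]] /= hpos.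
- by exists vZ; rewrite /Tadj /=.
- by exists vX; rewrite /Tadj /=.
- by exists (vA p); rewrite /Tadj /= eqxx.
- case: (eqVneq q p) => [E|ne].
    by exists (vA p); rewrite /Tadj /= E !eqxx.
  by exists (vA q); rewrite /Tadj /= ?eqxx (negbTE ne).
- move: hpos; case: (eqVneq q p) => [->|ne] // _.
  by exists vX; rewrite /Tadj /=.
Qed.

Lemma cardT4 : 3 < #|T|.
Proof. rewrite cardT; nia. Qed.

Lemma dsetA p (S : {set T}) : dset e (vA p) S = \big[minn/#|T|]_(w in S) phiA p w.
Proof.
apply: eq_bigr => w _; apply: dist_phi; first exact: phiA0.
- exact: phiA_lip.
- exact: phiA_desc.
apply: leq_trans cardT4; case: w => [[[?|]|]|[q []]] //=; by case: (_ == _).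
Qed.

Lemma phiA_eq p q w : w != vA p -> w != vB p -> w != vA q -> w != vB q -> phiA p w = phiA q w.
Proof.
case: w => [[[?|]|]|[r []]] //=; rewrite !eqI /= ?andbT ?andbF => h1 h2 h3 h4.
  by rewrite (negbTE h2) (negbTE h4).
by rewrite (negbTE h1) (negbTE h3).
Qed.

Lemma min0 p (S : {set T}) : vA p \in S -> \big[minn/#|T|]_(w in S) phiA p w = 0.
Proof.
move=> hS; apply/eqP; rewrite -leqn0.
apply: leq_trans (@bigmin_le _ (fun w => w \in S) (phiA p) _ _ hS) _.
by rewrite /= eqxx.
Qed.

Lemma min1 p (S : {set T}) : vA p \notin S -> (vX \in S) || (vB p \in S) ->
  \big[minn/#|T|]_(w in S) phiA p w = 1.
Proof.
move=> hn ho; apply/eqP; rewrite eqn_leq; apply/andP; split.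
  case/orP: ho => hw.
    by apply: leq_trans (@bigmin_le _ (fun w => w \in S) (phiA p) _ _ hw) _.
  apply: leq_trans (@bigmin_le _ (fun w => w \in S) (phiA p) _ _ hw) _.
  by rewrite /= eqxx.
apply: bigmin_ge; first by have := cardT3; lia.
move=> w hw; rewrite lt0n phiA0; apply: contraNneq hn => <-; exact: hw.
Qed.

Lemma lower (P : {set {set T}}) : partition P [set: T] -> locating e P -> h <= #|P|.
Proof.
case/and3P => /eqP cov triv _ hL.
pose pb := pblock P.
have pbP w : pb w \in P by apply: pblock_mem; rewrite cov inE.
have memP (S : {set T}) w : S \in P -> (w \in S) = (S == pb w).
  move=> hS; apply/idP/eqP => [hw|->]; first by symmetry; apply: def_pblock.
  by rewrite mem_pblock cov inE.
pose b p := if pb (vB p) == pb vX then pb (vA p) else pb (vB p).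
pose key p := (pb (vA p), b p).
have key2 (S : {set T}) r : S \in P -> vA r \notin S ->
    (vX \in S) || (vB r \in S) = (S == pb vX) || (S == b r).
  move=> hS; rewrite !memP // /b => hn.
  case: (eqVneq (pb (vB r)) (pb vX)) => [->|_] //.
  by rewrite orbb (negbTE hn) orbF.
have inj : injective key.
  move=> p q E; apply/eqP; apply/negPn/negP => npq.
  have neq : vA p != vA q by rewrite eqI andbT.
  move/forallP: hL => /(_ (vA p)) /forallP /(_ (vA q)); rewrite neq /=.
  case/existsP => S /andP [hS hd]; move: hd; rewrite !dsetA; apply/negP; rewrite negbK; apply/eqP.
  case: E => Ea Eb.
  case hx: (vA p \in S).
    have hxq : vA q \in S by rewrite memP // -Ea -memP.
    by rewrite !min0.
  have hxq : vA q \notin S by rewrite memP // -Ea -memP // hx.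
  have hxp : vA p \notin S by rewrite hx.
  case ho: ((vX \in S) || (vB p \in S)).
    have hoq : (vX \in S) || (vB q \in S) by rewrite key2 // -Eb -key2.
    by rewrite !min1.
  have hoq : ~~ ((vX \in S) || (vB q \in S)) by rewrite key2 // -Eb -key2 // ho.
  move/negbT: ho; rewrite !negb_or => /andP [h1 h2]; move: hoq; rewrite negb_or => /andP [_ h3].
  apply: eq_bigr => w hw; apply: phiA_eq; apply/eqP => E; [move: hxp|move: h2|move: hxq|move: h3]; by rewrite -E hw.
pose A := (pb vX, pb vX) |: setX P (P :\ pb vX).
have sub : key @: [set: 'I_n * 'I_n] \subset A.
  apply/subsetP => _ /imsetP [p _ ->]; rewrite /key /b !inE.
  case: (eqVneq (pb (vB p)) (pb vX)) => [_|ne].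
    case: (eqVneq (pb (vA p)) (pb vX)) => [->|ne]; first by rewrite eqxx.
    by rewrite /= !pbP orbT.
  by rewrite /= !pbP ne orbT.
have c1 : #|key @: [set: 'I_n * 'I_n]| = n * n by rewrite card_imset // cardsT card_prod card_ord.
have c2 : #|A| <= 1 + #|P| * (#|P| - 1).
  rewrite cardsU1 cardsX; have d1 := cardsD1 (pb vX) P; rewrite pbP /= in d1.
  have : ((pb vX, pb vX) \notin setX P (P :\ pb vX)) <= 1 by case: (_ \notin _).
  rewrite d1; move: (#|P :\ pb vX|) => c; move: (nat_of_bool _) => a; nia.
have := subset_leq_card sub; rewrite c1 => c3.
have := hm1 => h2.
nia.
Qed.

End Tree.
Theorem proposition7 (k h : nat) (hk : 1 <= k) (hh : k + 2 <= h) :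
  twin_number (@Tadj k h) = k /\ partition_dim (@Tadj k h) = h.
Proof.
split; first by apply: twin_val.
apply/eqP; rewrite eqn_leq; apply/andP; split.
  rewrite /partition_dim.
  apply: leq_trans (@bigmin_le _ (fun P => partition P [set: Tvert k h] && locating (@Tadj k h) P) (fun P => #|P|) _ (P0 k h) _) _.
    by rewrite P0_part // P0_loc.
  by rewrite P0_card.
rewrite /partition_dim; apply: bigmin_ge.
  have c := @cardT k h; apply: (leq_trans _ (eq_leq (esym c))).
  have E : h = (h - 1).+1 by lia.
  rewrite {1}E; move: (h - 1) => m; nia.
by move=> P /andP [h1 h2]; apply: lower.
Qed.
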